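(* Let $A\in H_n$ and $B\in H_k$ be neither positive semidefinite nor negative semidefinite, with $\|A_+\|_\infty=\|B_+\|_\infty$ and $\|A_-\|_\infty=\|B_-\|_\infty$. Then there exist a positive unital linear map $\Phi:H_n\to H_k$ with $\Phi(A)=B$ and a positive unital linear map $\Phi':H_k\to H_n$ with $\Phi'(B)=A$.
   Context: $H_n$ denotes the $n\times n$ complex Hermitian matrices. A linear map $\Phi:H_n\to H_k$ is positive if it maps positive semidefinite matrices to positive semidefinite matrices and unital if $\Phi(\mathbb{1})=\mathbb{1}$. Every $A\in H_n$ decomposes uniquely as $A=A_+-A_-$ with $A_+,A_-$ positive semidefinite and $A_+A_-=0$. $\|\cdot\|_\infty$ is the operator norm. *)

(* Defs.v *)
From HB Require Import structures.
From mathcomp Require Import all_boot all_order all_algebra.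
From mathcomp Require Import classical_sets reals.
From mathcomp Require Import complex.
Set Implicit Arguments. Unset Strict Implicit. Unset Printing Implicit Defensive.
Import Order.TTheory GRing.Theory Num.Theory.
Local Open Scope ring_scope.

Section Defs.
Variable R : realType.
Local Notation C := (R[i]).

Definition adjmx m p (M : 'M[C]_(m, p)) : 'M[C]_(p, m) := map_mx Num.conj (M^T).

Definition is_herm n (A : 'M[C]_n) : Prop := adjmx A = A.

Definition psd n (A : 'M[C]_n) : Prop :=
  is_herm A /\ forall v : 'cV[C]_n, 0 <= (adjmx v *m A *m v) 0 0.

Definition vnorm n (v : 'cV[C]_n) : R := Num.sqrt (complex.Re ((adjmx v *m v) 0 0)).

Definition opnorm n (M : 'M[C]_n) : R :=
  sup [set vnorm (M *m v) | v in [set v : 'cV[C]_n | vnorm v = 1]]%classic.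

(* Phi : H_n -> H_k (represented by a function on all n x n matrices whose
   behaviour is only constrained on H_n) is a real-linear, positive, unital map *)
Definition pos_unital_linear n k (Phi : 'M[C]_n -> 'M[C]_k) : Prop :=
  [/\ (forall X, is_herm X -> is_herm (Phi X)),
      (forall X Y, is_herm X -> is_herm Y -> Phi (X + Y) = Phi X + Phi Y),
      (forall (a : R) X, is_herm X -> Phi ((a%:C)%C *: X) = (a%:C)%C *: Phi X),
      (forall X, psd X -> psd (Phi X)) &
      Phi 1%:M = 1%:M].
End Defs.

(* Main.v *)
Require Import Defs.
From HB Require Import structures.
From mathcomp Require Import all_boot all_order all_algebra.
From mathcomp Require Import classical_sets reals.
From mathcomp Require Import complex spectral sesquilinear.
From mathcomp Require Import ring.
Import Order.TTheory GRing.Theory Num.Theory Num.Def.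
Local Open Scope ring_scope.
Local Open Scope sesquilinear_scope.
Local Notation "x %:C" := (real_complex _ x) (format "x %:C").


Set Implicit Arguments. Unset Strict Implicit. Unset Printing Implicit Defensive.
Section Help.
Variable R : realType.
Local Notation C := (R[i]).

Lemma adjmxE m p (M : 'M[C]_(m, p)) : adjmx M = M ^t conjC.
Proof. by []. Qed.

Lemma adjmxM m p q (A : 'M[C]_(m, p)) (B : 'M[C]_(p, q)) :
  adjmx (A *m B) = adjmx B *m adjmx A.
Proof. by rewrite /adjmx trmx_mul map_mxM. Qed.

Lemma adjmxK m p (A : 'M[C]_(m, p)) : adjmx (adjmx A) = A.
Proof. exact: trmxCK. Qed.

Lemma adjmxD m p (A B : 'M[C]_(m, p)) : adjmx (A + B) = adjmx A + adjmx B.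
Proof. by rewrite /adjmx linearD /= map_mxD. Qed.

Lemma adjmxN m p (A : 'M[C]_(m, p)) : adjmx (- A) = - adjmx A.
Proof. by rewrite /adjmx linearN /= map_mxN. Qed.

Lemma adjmxB m p (A B : 'M[C]_(m, p)) : adjmx (A - B) = adjmx A - adjmx B.
Proof. by rewrite adjmxD adjmxN. Qed.

Lemma adjmxZ m p (a : C) (A : 'M[C]_(m, p)) : adjmx (a *: A) = (Num.conj a) *: adjmx A.
Proof. by rewrite /adjmx linearZ /= map_mxZ. Qed.

Lemma adjmx1 n : adjmx (1%:M : 'M[C]_n) = 1%:M.
Proof. by rewrite /adjmx trmx1 map_mx1. Qed.

Lemma adjmx0 m p : adjmx (0 : 'M[C]_(m, p)) = 0.
Proof. by rewrite /adjmx trmx0 map_mx0. Qed.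

Lemma herm_spec n (X : 'M[C]_n) : is_herm X ->
  exists (P : 'M[C]_n) (d : 'rV[R]_n),
    [/\ P *m adjmx P = 1%:M, adjmx P *m P = 1%:M &
        X = adjmx P *m diag_mx (map_mx (real_complex R) d) *m P].
Proof.
move=> hX.
have hs : X \is hermsymmx.
  by apply/is_hermitianmxP; rewrite expr0 scale1r -adjmxE hX.
have Xn := hermitian_normalmx hs.
have /orthomx_spectralP XE := Xn.
have U := spectral_unitarymx X.
have dr := hermitian_spectral_diag_real hs.
exists (spectralmx X), (map_mx (@complex.Re R) (spectral_diag X)).
split.
- exact/unitarymxP.
- by have := mulVmx (unitarymx_unit U); rewrite invmx_unitary.
- have dE : map_mx (real_complex R) (map_mx (@complex.Re R) (spectral_diag X))
            = spectral_diag X.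
    by apply/matrixP => i j; rewrite !mxE RRe_real //; exact: (mxOverP dr).
  rewrite dE.
  have -> : adjmx (spectralmx X) = invmx (spectralmx X) by rewrite invmx_unitary.
  exact: XE.
Qed.


Lemma exists_max (I : finType) (i1 : I) (F : I -> R) : exists i0, forall j, F j <= F i0.
Proof.
by case: (@arg_maxP _ _ I i1 xpredT F isT) => i0 _ H; exists i0 => j; apply: H.
Qed.

Definition qf n (v : 'cV[C]_n) (M : 'M[C]_n) := (adjmx v *m M *m v) 0 0.
Definition Dg n (g : 'rV[R]_n) : 'M[C]_n := diag_mx (map_mx (real_complex R) g).

Lemma qfD n v (A B : 'M[C]_n) : qf v (A + B) = qf v A + qf v B.
Proof. by rewrite /qf mulmxDr mulmxDl mxE. Qed.

Lemma qfN n v (A : 'M[C]_n) : qf v (- A) = - qf v A.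
Proof. by rewrite /qf mulmxN mulNmx mxE. Qed.

Lemma qfB n v (A B : 'M[C]_n) : qf v (A - B) = qf v A - qf v B.
Proof. by rewrite qfD qfN. Qed.

Lemma qfZ n v (a : C) (A : 'M[C]_n) : qf v (a *: A) = a * qf v A.
Proof. by rewrite /qf -scalemxAr -scalemxAl mxE. Qed.

Lemma qf_conj n v (P M : 'M[C]_n) : qf v (adjmx P *m M *m P) = qf (P *m v) M.
Proof. by rewrite /qf adjmxM !mulmxA. Qed.

Lemma qf_Dg n (w : 'cV[C]_n) (g : 'rV[R]_n) :
  qf w (Dg g) = \sum_i (g 0 i)%:C * `|w i 0| ^+ 2.
Proof.
rewrite /qf /Dg mul_mx_diag mxE; apply: eq_bigr => i _.
by rewrite !mxE normCK; ring.
Qed.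

Lemma qf_Dg_ge0 n (w : 'cV[C]_n) (g : 'rV[R]_n) : (forall i, 0 <= g 0 i) -> 0 <= qf w (Dg g).
Proof.
move=> hg; rewrite qf_Dg; apply: sumr_ge0 => i _.
by apply: mulr_ge0; [rewrite ler0c | apply: exprn_ge0].
Qed.

Lemma Dg1 n : Dg (const_mx 1) = 1%:M :> 'M[C]_n.
Proof. by apply/matrixP => i j; rewrite !mxE; case: eqP. Qed.

Lemma DgM n (f g : 'rV[R]_n) : Dg f *m Dg g = Dg (\row_j (f 0 j * g 0 j)).
Proof. by rewrite /Dg mulmx_diag; congr diag_mx; apply/matrixP => i j; rewrite !mxE rmorphM. Qed.

Lemma Dg_delta n (g : 'rV[R]_n) i0 :
  Dg g *m delta_mx i0 0 = (g 0 i0)%:C *: (delta_mx i0 0 : 'cV[C]_n).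
Proof.
apply/matrixP => i j; rewrite /Dg mul_diag_mx !mxE.
by case: (eqVneq i i0) => [->|_]; rewrite ?mulr0 ?andbF ?mulr0n ?mulr0.
Qed.

Lemma adj_delta n (i0 : 'I_n) : adjmx (delta_mx i0 0 : 'cV[C]_n) *m delta_mx i0 0 = 1%:M.
Proof.
rewrite /adjmx trmx_delta.
have -> : (delta_mx 0 i0 : 'rV[C]_n) ^ Num.conj = delta_mx 0 i0.
  by apply/matrixP => i j; rewrite !mxE; case: (_ && _); rewrite ?conjC1 ?conjC0.
by rewrite mul_delta_mx; apply/matrixP => i j; rewrite !ord1 !mxE.
Qed.


Lemma Re_mulC (x : R) (z : C) : complex.Re (x%:C * z) = x * complex.Re z.
Proof. by case: z => a b /=; rewrite mul0r subr0. Qed.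

Lemma conj_realC (x : R) : Num.conj (x%:C) = x%:C.
Proof. by apply/CrealP; apply/complex_realP; exists x. Qed.

Lemma ge0_Re (z : C) : 0 <= z -> 0 <= complex.Re z.
Proof. by rewrite lecE => /andP[]. Qed.

Lemma key n (X : 'M[C]_n) : psd X -> X != 0 -> exists (m : R) (u : 'cV[C]_n),
  [/\ 0 < m, opnorm X = m, adjmx u *m u = 1%:M, X *m u = m%:C *: u &
      psd (m%:C *: X - X *m X)].
Proof.
move=> [hX psdX] X0.
have [P [f [PPa PaP XE]]] := herm_spec hX.
change (X = adjmx P *m Dg f *m P) in XE.
have qX v : qf v X = \sum_i (f 0 i)%:C * `|(P *m v) i 0| ^+ 2.
  by rewrite XE qf_conj qf_Dg.
have XX : X *m X = adjmx P *m Dg (\row_j (f 0 j * f 0 j)) *m P.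
  rewrite XE -DgM !mulmxA -(mulmxA _ P (adjmx P)) PPa mulmx1.
  by [].  
have qfe i : qf (adjmx P *m delta_mx i 0) X = (f 0 i)%:C.
  rewrite XE qf_conj mulmxA PPa mul1mx /qf -mulmxA Dg_delta -scalemxAr adj_delta.
  by rewrite !mxE /= mulr1.
have f0 i : 0 <= f 0 i by rewrite -ler0c -qfe; apply: psdX.
have [i1 _] : exists i1 : 'I_n, True.
  case: (pickP (@predT 'I_n)) => [i1 _|none]; first by exists i1.
  suff X00 : X = 0 by rewrite X00 eqxx in X0.
  by apply/matrixP => i; case/negP: (none i).
have [i0 Hi0] := exists_max i1 (fun i => f 0 i).
set m := f 0 i0.
have m0 : 0 <= m by apply: f0.
pose u : 'cV[C]_n := adjmx P *m delta_mx i0 0.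
have uu : adjmx u *m u = 1%:M.
  by rewrite /u adjmxM adjmxK !mulmxA -(mulmxA _ P) PPa mulmx1 adj_delta.
have Xu : X *m u = m%:C *: u.
  rewrite XE /u !mulmxA -(mulmxA _ P) PPa mulmx1 -mulmxA Dg_delta.
  by rewrite scalemxAr.
have mpos : 0 < m.
  rewrite lt0r m0 andbT; apply/negP => /eqP mE.
  move: X0; rewrite XE.
  have -> : f = 0.
    by apply/matrixP => i j; rewrite !ord1 mxE; apply/le_anti; rewrite f0 -mE Hi0.
  have -> : Dg (0 : 'rV[R]_n) = 0.
    by apply/matrixP => i j; rewrite !mxE mul0rn.
  by rewrite mulmx0 mul0mx eqxx.
exists m, u; split => //.
- have vu : vnorm u = 1.
    by rewrite /vnorm uu mxE /= sqrtr1.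
  have vXu : vnorm (X *m u) = m.
    rewrite /vnorm Xu adjmxZ conj_realC -scalemxAl -scalemxAr uu !mxE /=.
    by rewrite !(mul0r, mulr0, mulr1, subr0, addr0) -expr2 sqrtr_sqr ger0_norm.
  rewrite /opnorm.
  set E := ([set vnorm (X *m v) | v in [set v : 'cV[C]_n | vnorm v = 1]])%classic.
  have mE : E m by exists u.
  have ub : ubound E m.
    move=> _ [v /= hv <-].
    have s1 : (adjmx v *m v) 0 0 = qf v (adjmx P *m Dg (const_mx 1) *m P).
      by rewrite Dg1 mulmx1 PaP /qf mulmx1.
    have s_sum : (adjmx v *m v) 0 0 = \sum_i 1%:C * `|(P *m v) i 0| ^+ 2.
      by rewrite s1 qf_conj qf_Dg; apply: eq_bigr => i _; rewrite mxE.
    have t1 : (adjmx (X *m v) *m (X *m v)) 0 0 = qf v (X *m X).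
      by rewrite /qf adjmxM hX !mulmxA.
    set s := (adjmx v *m v) 0 0 in s1 s_sum hv *.
    set t := (adjmx (X *m v) *m (X *m v)) 0 0 in t1 *.
    have tle : t <= (m * m)%:C * s.
      rewrite t1 XX qf_conj qf_Dg s_sum mulr_sumr; apply: ler_sum => i _.
      set w := `|_| ^+ 2; rewrite [(\row__ _) 0 i]mxE (_ : 1%:C = 1) // mul1r.
      apply: ler_pM => //; first by rewrite ler0c mulr_ge0.
        by rewrite /w exprn_ge0.
      by rewrite lecR; apply: ler_pM.
    have s0 : 0 <= s.
      by rewrite s_sum; apply: sumr_ge0 => i _; rewrite mul1r exprn_ge0.
    have Res : complex.Re s = 1.
      have hv' : Num.sqrt (complex.Re s) = 1 := hv.
      by rewrite -(sqr_sqrtr (ge0_Re s0)) hv' expr1n.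
    have : complex.Re t <= m * m.
      by move: tle; rewrite lecE => /andP[_]; rewrite Re_mulC Res mulr1.
    move=> Hle; rewrite /vnorm -/t -(ger0_norm m0) -sqrtr_sqr ler_sqrt ?sqr_ge0 //.
  apply: le_anti; apply/andP; split; first by apply: ge_sup => //; exists m.
  by apply: ub_le_sup => //; exists m.
- split.
    by rewrite /is_herm adjmxB adjmxZ adjmxM hX conj_realC.
  move=> v; rewrite -/(qf v _) qfB qfZ XX qf_conj qf_Dg qX mulr_sumr -sumrB.
  apply: sumr_ge0 => i _; rewrite !mxE mulrA -rmorphM -mulrBl -rmorphB.
  apply: mulr_ge0; last exact: exprn_ge0.
  by rewrite ler0c -mulrBl mulr_ge0 // subr_ge0 Hi0.
Qed.


Definition ip n (a b : 'cV[C]_n) := (adjmx a *m b) 0 0.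

Lemma ipDr n (a b c : 'cV[C]_n) : ip a (b + c) = ip a b + ip a c.
Proof. by rewrite /ip mulmxDr mxE. Qed.
Lemma ipDl n (a b c : 'cV[C]_n) : ip (a + b) c = ip a c + ip b c.
Proof. by rewrite /ip adjmxD mulmxDl mxE. Qed.
Lemma ipNr n (a b : 'cV[C]_n) : ip a (- b) = - ip a b.
Proof. by rewrite /ip mulmxN mxE. Qed.
Lemma ipNl n (a b : 'cV[C]_n) : ip (- a) b = - ip a b.
Proof. by rewrite /ip adjmxN mulNmx mxE. Qed.
Lemma ipBr n (a b c : 'cV[C]_n) : ip a (b - c) = ip a b - ip a c.
Proof. by rewrite ipDr ipNr. Qed.
Lemma ipBl n (a b c : 'cV[C]_n) : ip (a - b) c = ip a c - ip b c.
Proof. by rewrite ipDl ipNl. Qed.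
Lemma ipZr n (a b : 'cV[C]_n) (c : C) : ip a (c *: b) = c * ip a b.
Proof. by rewrite /ip -scalemxAr mxE. Qed.
Lemma ipZl n (a b : 'cV[C]_n) (c : C) : ip (c *: a) b = Num.conj c * ip a b.
Proof. by rewrite /ip adjmxZ -scalemxAl mxE. Qed.
Lemma ip0r n (a : 'cV[C]_n) : ip a 0 = 0.
Proof. by rewrite /ip mulmx0 mxE. Qed.
Lemma ipM n (M : 'M[C]_n) (a b : 'cV[C]_n) : ip (M *m a) b = ip a (adjmx M *m b).
Proof. by rewrite /ip adjmxM mulmxA. Qed.
Lemma qf_ip n (v : 'cV[C]_n) M : qf v M = ip v (M *m v).
Proof. by rewrite /qf /ip mulmxA. Qed.
Lemma ip_ge0 n (a : 'cV[C]_n) : 0 <= ip a a.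
Proof.
rewrite /ip mxE; apply: sumr_ge0 => i _; rewrite !mxE mulrC; exact: mul_conjC_ge0.
Qed.

Lemma conj_ge0 (c : C) : 0 <= c -> Num.conj c = c.
Proof. by move=> c0; apply: conj_Creal; apply: ger0_real. Qed.

Lemma herm_psd n (X : 'M[C]_n) : psd X -> is_herm X.
Proof. by case. Qed.

Lemma psdD n (X Y : 'M[C]_n) : psd X -> psd Y -> psd (X + Y).
Proof.
move=> [hX pX] [hY pY]; split; first by rewrite /is_herm adjmxD hX hY.
by move=> v; rewrite -/(qf v _) qfD addr_ge0 //; [apply: pX | apply: pY].
Qed.

Lemma psdZ n (c : C) (X : 'M[C]_n) : 0 <= c -> psd X -> psd (c *: X).
Proof.
move=> c0 [hX pX]; split; first by rewrite /is_herm adjmxZ hX conj_ge0.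
by move=> v; rewrite -/(qf v _) qfZ mulr_ge0 //; apply: pX.
Qed.

Lemma conj_qf n (u : 'cV[C]_n) X : Num.conj (qf u X) = qf u (adjmx X).
Proof.
rewrite /qf; have -> : Num.conj ((adjmx u *m X *m u) 0 0) = adjmx (adjmx u *m X *m u) 0 0.
  by rewrite !mxE.
by rewrite !adjmxM adjmxK mulmxA.
Qed.

Lemma T_psd k (Bp Bm : 'M[C]_k) (a b : C) : psd Bp -> psd Bm -> Bp *m Bm = 0 ->
  0 < a -> 0 < b -> psd (a *: Bp - Bp *m Bp) -> psd (b *: Bm - Bm *m Bm) ->
  psd (1%:M - a^-1 *: Bp - b^-1 *: Bm).
Proof.
move=> pBp pBm BpBm a0 b0 [_ qa] [_ qb].
have hBp := herm_psd pBp; have hBm := herm_psd pBm.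
have BmBp : Bm *m Bp = 0 by rewrite -hBp -hBm -adjmxM BpBm adjmx0.
have ca : Num.conj (a^-1) = a^-1 by rewrite conj_ge0 // invr_ge0 ltW.
have cb : Num.conj (b^-1) = b^-1 by rewrite conj_ge0 // invr_ge0 ltW.
split; first by rewrite /is_herm !adjmxB adjmx1 !adjmxZ hBp hBm ca cb.
move=> v; rewrite -/(qf v _) !qfB !qfZ !qf_ip mul1mx.
set x := Bp *m v; set y := Bm *m v.
have hx : 0 <= a * ip v x - ip x x.
  by have := qa v; rewrite -/(qf v _) qfB qfZ !qf_ip ipM hBp -mulmxA.
have hy : 0 <= b * ip v y - ip y y.
  by have := qb v; rewrite -/(qf v _) qfB qfZ !qf_ip ipM hBm -mulmxA.
have xy : ip x y = 0 by rewrite /x ipM hBp /y mulmxA BpBm mul0mx ip0r.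
have yx : ip y x = 0 by rewrite /y ipM hBm /x mulmxA BmBp mul0mx ip0r.
have xv : ip x v = ip v x by rewrite /x ipM hBp.
have yv : ip y v = ip v y by rewrite /y ipM hBm.
pose w := v - a^-1 *: x - b^-1 *: y.
have W0 := ip_ge0 w.
have an : a != 0 by rewrite gt_eqF.
have bn : b != 0 by rewrite gt_eqF.
have -> : ip v v - a^-1 * ip v x - b^-1 * ip v y =
   ip w w + a^-1 ^+ 2 * (a * ip v x - ip x x) + b^-1 ^+ 2 * (b * ip v y - ip y y).
  rewrite /w !ipBl !ipBr !ipZl !ipZr ca cb xy yx xv yv.
  field; exact/andP.
by rewrite !addr_ge0 // mulr_ge0 // exprn_ge0 // invr_ge0 ltW.
Qed.


Lemma half n k (A Ap Am : 'M[C]_n) (Bp Bm : 'M[C]_k) :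
  psd Ap -> psd Am -> A = Ap - Am -> Ap *m Am = 0 -> Ap != 0 -> Am != 0 ->
  psd Bp -> psd Bm -> Bp *m Bm = 0 -> Bp != 0 -> Bm != 0 ->
  opnorm Ap = opnorm Bp -> opnorm Am = opnorm Bm ->
  exists Phi : 'M[C]_n -> 'M[C]_k, pos_unital_linear Phi /\ Phi A = Bp - Bm.
Proof.
move=> pAp pAm AE ApAm Ap0 Am0 pBp pBm BpBm Bp0 Bm0 Np Nm.
have [ap [up [ap0 apE uu Apu _]]] := key pAp Ap0.
have [am [um [am0 amE vv Amu _]]] := key pAm Am0.
have [bp [_ [_ bpE _ _ qBp]]] := key pBp Bp0.
have [bm [_ [_ bmE _ _ qBm]]] := key pBm Bm0.
have ebp : bp = ap by rewrite -bpE -Np apE.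
have ebm : bm = am by rewrite -bmE -Nm amE.
rewrite {}ebp in qBp; rewrite {}ebm in qBm.
have hAp := herm_psd pAp; have hAm := herm_psd pAm.
have AmAp : Am *m Ap = 0 by rewrite -hAp -hAm -adjmxM ApAm adjmx0.
set a := ap%:C in Apu qBp *; set b := am%:C in Amu qBm *.
have a0 : 0 < a by rewrite /a ltcR.
have b0 : 0 < b by rewrite /b ltcR.
have an : a != 0 by rewrite gt_eqF.
have bn : b != 0 by rewrite gt_eqF.
have Amup : Am *m up = 0.
  have : a *: (Am *m up) = 0 by rewrite scalemxAr -Apu mulmxA AmAp mul0mx.
  by move/eqP; rewrite scaler_eq0 (negbTE an) /= => /eqP.
have Apum : Ap *m um = 0.
  have : b *: (Ap *m um) = 0 by rewrite scalemxAr -Amu mulmxA ApAm mul0mx.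
  by move/eqP; rewrite scaler_eq0 (negbTE bn) /= => /eqP.
have qpA : qf up A = a.
  by rewrite qf_ip AE mulmxBl Apu Amup subr0 ipZr /ip uu mxE /= mulr1.
have qmA : qf um A = - b.
  by rewrite qf_ip AE mulmxBl Amu Apum sub0r ipNr ipZr /ip vv mxE /= mulr1.
have qp1 : qf up 1%:M = 1 by rewrite qf_ip mul1mx /ip uu mxE.
have qm1 : qf um 1%:M = 1 by rewrite qf_ip mul1mx /ip vv mxE.
have pT := T_psd pBp pBm BpBm a0 b0 qBp qBm.
set T := 1%:M - a^-1 *: Bp - b^-1 *: Bm in pT.
have TE : T = 1%:M - a^-1 *: Bp - b^-1 *: Bm by [].
clearbody T.
have ab0 : 0 < a + b by rewrite addr_gt0.
pose Mp := a^-1 *: Bp + (b / (a + b)) *: T.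
pose Mm := b^-1 *: Bm + (a / (a + b)) *: T.
have pMp : psd Mp.
  apply: psdD; apply: psdZ => //; first by rewrite invr_ge0 ltW.
  by rewrite divr_ge0 // ltW.
have pMm : psd Mm.
  apply: psdD; apply: psdZ => //; first by rewrite invr_ge0 ltW.
  by rewrite divr_ge0 // ltW.
have abn : a + b != 0 by rewrite gt_eqF.
exists (fun X => qf up X *: Mp + qf um X *: Mm).
split; last first.
  rewrite qpA qmA /Mp /Mm !scalerDr !scalerA addrACA -scalerDl.
  have -> : a * (b / (a + b)) + - b * (a / (a + b)) = 0 by field.
  by rewrite scale0r addr0 mulfV // mulNr mulfV // scaleN1r scale1r.
split.
- move=> X hX; rewrite /is_herm adjmxD !adjmxZ !conj_qf hX.
  by rewrite (herm_psd pMp) (herm_psd pMm).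
- by move=> X Y _ _; rewrite !qfD !scalerDl addrACA.
- by move=> c X _ /=; rewrite !qfZ -!scalerA -scalerDr.
- move=> X [hX pX]; apply: psdD; apply: psdZ => //; exact: pX.
- rewrite qp1 qm1 !scale1r /Mp /Mm addrACA -scalerDl.
  have -> : b / (a + b) + a / (a + b) = 1 by field.
  rewrite scale1r TE -[1%:M - _ - _]addrA -opprD addrC subrK //.
Qed.

End Help.

Theorem mainTheorem8 (R : realType) (n k : nat) (A : 'M[R[i]]_n) (B : 'M[R[i]]_k) :
  is_herm A -> is_herm B ->
  ~ psd A -> ~ psd (- A) -> ~ psd B -> ~ psd (- B) ->
  forall (Ap Am : 'M[R[i]]_n) (Bp Bm : 'M[R[i]]_k),
    psd Ap -> psd Am -> A = Ap - Am -> Ap *m Am = 0 ->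
    psd Bp -> psd Bm -> B = Bp - Bm -> Bp *m Bm = 0 ->
    opnorm Ap = opnorm Bp -> opnorm Am = opnorm Bm ->
    (exists Phi : 'M[R[i]]_n -> 'M[R[i]]_k, pos_unital_linear Phi /\ Phi A = B) /\
    (exists Phi' : 'M[R[i]]_k -> 'M[R[i]]_n, pos_unital_linear Phi' /\ Phi' B = A).
Proof.
move=> _ _ nA nA' nB nB' Ap Am Bp Bm pAp pAm AE ApAm pBp pBm BE BpBm Np Nm.
have Ap0 : Ap != 0.
  by apply/eqP => E0; apply: nA'; rewrite AE E0 sub0r opprK.
have Am0 : Am != 0.
  by apply/eqP => E0; apply: nA; rewrite AE E0 subr0.
have Bp0 : Bp != 0.
  by apply/eqP => E0; apply: nB'; rewrite BE E0 sub0r opprK.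
have Bm0 : Bm != 0.
  by apply/eqP => E0; apply: nB; rewrite BE E0 subr0.
split.
  by rewrite BE; apply: (half pAp pAm AE ApAm Ap0 Am0 pBp pBm BpBm Bp0 Bm0 Np Nm).
rewrite AE; apply: (half pBp pBm BE BpBm Bp0 Bm0 pAp pAm ApAm Ap0 Am0) => //.
Qed.
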